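(* Let $N=[n]$ and let $v:2^N\to\mathbb{R}_+$ be any monotone valuation with $v(\emptyset)=0$. Let $X$ be a maximal decision map for $v$ and let $p$ be a pure Nash equilibrium of the pricing game defined by $v$ and $X$. Then for any (not necessarily maximal) decision map $X'$ for $v$ and every $\epsilon>0$ there exists $p^\epsilon\in\mathbb{R}^n_+$ which is an $\epsilon$-Nash equilibrium of the pricing game defined by $v$ and $X'$, such that $v(X'(p^\epsilon))=v(X(p))$, and $p^\epsilon\to p$ as $\epsilon\to 0$.
   Context: Pricing game: $N=[n]$ is a set of services, service $i$ controlled by seller $i$. A buyer has valuation $v:2^N\to\mathbb{R}_+$, monotone with $v(\emptyset)=0$. For $p\in\mathbb{R}^n_+$, $p(S)=\sum_{j\in S}p_j$ and $D(v;p)=\arg\max_{S\subseteq N}(v(S)-p(S))$. A decision map is $X:\mathbb{R}^n_+\to 2^N$ with $X(p)\in D(v;p)$ for all $p$; it is maximal if for every $p$ there is no $S'\in D(v;p)$ with $X(p)\subsetneq S'$. Given a decision map $Y$, seller $i$'s utility is $u_i^Y(p)=p_i\cdot\mathbf{1}\{i\in Y(p)\}$. A pure Nash equilibrium of the game defined by $Y$ is a $p$ with $u^Y_i(p)\ge u^Y_i(p_i',p_{-i})$ for all $i$ and $p_i'\in\mathbb{R}_+$; an $\epsilon$-Nash equilibrium is a $p$ with $u^Y_i(p)\ge u^Y_i(p_i',p_{-i})-\epsilon$ for all $i$ and $p_i'\in\mathbb{R}_+$. The welfare of the game defined by $Y$ at $p$ is $v(Y(p))$. *)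

(* Defs.v *)
From HB Require Import structures.
From mathcomp Require Import all_boot all_order all_algebra.
From mathcomp Require Import reals.
Set Implicit Arguments. Unset Strict Implicit. Unset Printing Implicit Defensive.
Import Order.TTheory GRing.Theory Num.Theory.
Local Open Scope ring_scope.

Section Pricing.
Variables (R : realType) (n : nat).

Definition nonneg_prices (p : 'I_n -> R) : Prop := forall i, 0 <= p i.

Definition valuation (v : {set 'I_n} -> R) : Prop :=
  [/\ forall S : {set 'I_n}, 0 <= v S,
      forall S T : {set 'I_n}, S \subset T -> v S <= v T
    & v set0 = 0].

Definition price_of (p : 'I_n -> R) (S : {set 'I_n}) : R := \sum_(j in S) p j.

Definition in_demand (v : {set 'I_n} -> R) (p : 'I_n -> R) (S : {set 'I_n}) : Prop :=
  forall T : {set 'I_n}, v T - price_of p T <= v S - price_of p S.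

Definition decision_map (v : {set 'I_n} -> R) (X : ('I_n -> R) -> {set 'I_n}) : Prop :=
  forall p, nonneg_prices p -> in_demand v p (X p).

Definition maximal_decision_map (v : {set 'I_n} -> R) (X : ('I_n -> R) -> {set 'I_n}) : Prop :=
  decision_map v X /\
  forall p, nonneg_prices p ->
    ~ exists S', in_demand v p S' /\ X p \proper S'.

Definition upd (p : 'I_n -> R) (i : 'I_n) (x : R) : 'I_n -> R :=
  fun j => if j == i then x else p j.

Definition seller_utility (Y : ('I_n -> R) -> {set 'I_n}) (i : 'I_n) (p : 'I_n -> R) : R :=
  p i * (i \in Y p)%:R.

Definition eps_nash (Y : ('I_n -> R) -> {set 'I_n}) (eps : R) (p : 'I_n -> R) : Prop :=
  nonneg_prices p /\
  forall (i : 'I_n) (x : R), 0 <= x ->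
    seller_utility Y i (upd p i x) - eps <= seller_utility Y i p.

Definition pure_nash (Y : ('I_n -> R) -> {set 'I_n}) (p : 'I_n -> R) : Prop :=
  nonneg_prices p /\
  forall (i : 'I_n) (x : R), 0 <= x ->
    seller_utility Y i (upd p i x) <= seller_utility Y i p.

Definition converges_at_0plus (pe : R -> 'I_n -> R) (p : 'I_n -> R) : Prop :=
  forall delta : R, 0 < delta -> exists eta : R, 0 < eta /\
    forall eps : R, 0 < eps -> eps < eta -> forall i, `|pe eps i - p i| < delta.

End Pricing.

(* Main.v *)
Require Import Defs.
From HB Require Import structures.
From mathcomp Require Import all_boot all_order all_algebra.
From mathcomp Require Import reals ring lra.
Import Order.TTheory GRing.Theory Num.Theory.
Local Open Scope ring_scope.

Section Aux.
Variables (R : realType) (n : nat).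
Implicit Types (p s : 'I_n -> R) (S A : {set 'I_n}).

Definition qv p S (t : R) : 'I_n -> R :=
  fun j => p j - t * (p j * (j \in S)%:R) + t * (j \notin S)%:R.
Definition ps p S A : R := \sum_(j in A) p j * (j \in S)%:R.
Definition cnt S A : R := \sum_(j in A) ((j \notin S)%:R : R).

Lemma price_qv p S t A :
  price_of (qv p S t) A = price_of p A - t * ps p S A + t * cnt S A.
Proof.
by rewrite /price_of /qv /ps /cnt big_split /= big_split /= sumrN !mulr_sumr.
Qed.

Lemma price_upd s i x A :
  price_of (upd s i x) A = price_of s A + (x - s i) * (i \in A)%:R.
Proof.
rewrite /price_of; case: (boolP (i \in A)) => iA.
  rewrite (bigD1 i iA) [in RHS](bigD1 i iA) /= /upd eqxx.
  rewrite (eq_bigr (fun j => s j)); last by move=> j /andP[_ /negbTE ->].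
  rewrite mulr1; lra.
rewrite mulr0 addr0; apply: eq_bigr => j jA.
rewrite /upd; case: eqP => // ji; by rewrite -ji jA in iA.
Qed.

Lemma ps_ge0 p S A : (forall j, 0 <= p j) -> 0 <= ps p S A.
Proof. move=> hp; apply: sumr_ge0 => j _; by rewrite mulr_ge0. Qed.

Lemma ps_le p S A : (forall j, 0 <= p j) -> ps p S A <= \sum_j p j.
Proof.
move=> hp; rewrite /ps big_mkcond /=; apply: ler_sum => j _.
case: (j \in A); case: (j \in S) => /=; by rewrite ?mulr1 ?mulr0.
Qed.

Lemma cnt_ge0 S A : 0 <= cnt S A.
Proof. by apply: sumr_ge0 => j _; rewrite ler0n. Qed.

Lemma cnt_le S A : cnt S A <= n%:R.
Proof.
have -> : (n%:R : R) = \sum_(j : 'I_n) (1 : R) by rewrite sumr_const card_ord.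
rewrite /cnt big_mkcond /=; apply: ler_sum => j _.
by case: (j \in A); case: (j \in S).
Qed.

Lemma pi_le p i : (forall j, 0 <= p j) -> p i <= \sum_j p j.
Proof.
move=> hp; rewrite (bigD1 i) //= lerDl; by apply: sumr_ge0.
Qed.

Lemma demand_lemma (v : {set 'I_n} -> R) p S T t :
  0 < t -> (forall j, 0 <= p j) -> in_demand v p S -> in_demand v (qv p S t) T ->
  [/\ T \subset S, v T = v S & forall j, j \in S -> j \notin T -> p j = 0].
Proof.
move=> ht hp hS hT.
have h1 := hS T; have h2 := hT S.
rewrite !price_qv in h2.
have psS : ps p S S = price_of p S.
  by apply: eq_bigr => j ->; rewrite mulr1.
have cS : cnt S S = 0 by apply: big1 => j ->.
set pST := \sum_(j in S) p j * (j \in T)%:R.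
have psT : ps p S T = pST.
  rewrite /ps /pST big_mkcond [RHS]big_mkcond /=; apply: eq_bigr => j _.
  by case: (j \in T); case: (j \in S); rewrite ?mulr1 ?mulr0.
have hle : pST <= price_of p S.
  rewrite /pST /price_of; apply: ler_sum => j _.
  by case: (j \in T); rewrite ?mulr1 ?mulr0.
have c0 := cnt_ge0 S T.
rewrite psS cS psT in h2.
have e1 : cnt S T = 0 by nra.
have e2 : pST = price_of p S by nra.
have sub : T \subset S.
  apply/subsetP => j jT.
  have nn : forall k, k \in T -> (0:R) <= (k \notin S)%:R by move=> k _; exact: ler0n.
  move: (psumr_eq0P nn e1 jT).
  by case: (j \in S) => //= /eqP; rewrite oner_eq0.
have z : forall j, j \in S -> p j - p j * (j \in T)%:R = 0.
  apply: psumr_eq0P.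
    move=> j _; have := hp j; case: (j \in T); rewrite ?mulr1 ?mulr0; lra.
  by rewrite sumrB -/pST e2 subrr.
have pT : price_of p T = price_of p S.
  rewrite -e2 -psT; apply: eq_bigr => j jT; by rewrite (subsetP sub j jT) mulr1.
split=> //; first by rewrite e1 e2 in h2; lra.
move=> j jS jT; move: (z j jS); rewrite (negbTE jT) mulr0; lra.
Qed.

Lemma qv_ge0 p S t : 0 <= t -> t <= 1 -> (forall j, 0 <= p j) ->
  nonneg_prices (qv p S t).
Proof.
move=> h0 h1 hp j; rewrite /qv; have := hp j.
case: (j \in S) => /=; rewrite ?mulr1 ?mulr0 => hj; nra.
Qed.

Lemma upd_ge0 s i x : nonneg_prices s -> 0 <= x -> nonneg_prices (upd s i x).
Proof. by move=> hs hx j; rewrite /upd; case: eqP. Qed.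

Lemma dev_lemma (v : {set 'I_n} -> R) X X' p t i x :
  0 < t -> t <= 1 -> pure_nash X p -> decision_map v X -> decision_map v X' ->
  0 <= x -> i \in X' (upd (qv p (X p) t) i x) ->
  x <= p i * (i \in X p)%:R + t * (\sum_j p j + n%:R + 2).
Proof.
move=> ht ht1 [hp hN] hX hX' hx hiW.
set S := X p; set q := qv p S t; set P := \sum_j p j.
have ht0 : 0 <= t by lra.
have hq : nonneg_prices q by apply: qv_ge0.
have P0 : 0 <= P by apply: sumr_ge0.
have hpi : 0 <= p i * (i \in S)%:R by rewrite mulr_ge0.
case: (ltrP (x - t * (P + n%:R + 2)) 0) => hy.
  have : 0 <= t * (P + n%:R + 2) by rewrite mulr_ge0 // addr_ge0 // addr_ge0.
  lra.
have hNy := hN i _ hy; rewrite /seller_utility in hNy.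
case: (boolP (i \in X (upd p i (x - t * (P + n%:R + 2))))) => hiZ.
  rewrite hiZ /upd eqxx mulr1 in hNy; rewrite -/S in hNy; lra.
exfalso.
set Z := X (upd p i (x - t * (P + n%:R + 2))) in hiZ.
set W := X' (upd q i x) in hiW.
have hqx : nonneg_prices (upd q i x) by apply: upd_ge0.
have hpy : nonneg_prices (upd p i (x - t * (P + n%:R + 2))) by apply: upd_ge0.
have hW := hX' _ hqx Z.
have hZ := hX _ hpy W.
rewrite /in_demand !price_upd /q !price_qv (negbTE hiZ) hiW /qv in hW hZ.
rewrite !mulr0 !mulr1 in hW hZ.
have b1 : t * ps p S W <= t * P by apply: ler_wpM2l => //; apply: ps_le.
have b2 : 0 <= t * cnt S W by rewrite mulr_ge0 // cnt_ge0.
have b3 : 0 <= t * ps p S Z by rewrite mulr_ge0 // ps_ge0.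
have b4 : t * cnt S Z <= t * n%:R by apply: ler_wpM2l => //; apply: cnt_le.
have b5 : 0 <= t * (p i * (i \in S)%:R) by rewrite mulr_ge0.
have b6 : t * (i \notin S)%:R <= t.
  by case: (i \notin S); rewrite ?mulr1 ?mulr0.
lra.
Qed.

End Aux.
Arguments qv {R n}.
Arguments ps {R n}.
Arguments cnt {R n}.

Theorem mainTheorem3 (R : realType) (n : nat)
    (v : {set 'I_n} -> R) (X : ('I_n -> R) -> {set 'I_n}) (p : 'I_n -> R) :
  valuation v ->
  maximal_decision_map v X ->
  pure_nash X p ->
  forall X' : ('I_n -> R) -> {set 'I_n},
    decision_map v X' ->
    exists pe : R -> 'I_n -> R,
      (forall eps : R, 0 < eps ->
         eps_nash X' eps (pe eps) /\ v (X' (pe eps)) = v (X p)) /\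
      converges_at_0plus pe p.
Proof.
move=> _ [hX _] hNash X' hX'.
have [hp hN] := hNash.
set S := X p; set P := \sum_j p j; set K := 2 * P + n%:R + 2.
have P0 : 0 <= P by apply: sumr_ge0.
have n0 : (0:R) <= n%:R by apply: ler0n.
have K0 : 0 < K by rewrite /K; lra.
have tfacts : forall eps : R, 0 < eps ->
    [/\ 0 < eps / (K + eps), eps / (K + eps) <= 1 & eps / (K + eps) * K <= eps].
  move=> eps he; have hKe : 0 < K + eps by lra.
  split; first by rewrite divr_gt0.
    by rewrite ler_pdivrMr // mul1r; lra.
  by rewrite mulrAC ler_pdivrMr //; nra.
exists (fun eps => qv p S (eps / (K + eps))).
split.
  move=> eps he; have [ht ht1 htK] := tfacts eps he.
  set t := eps / (K + eps) in ht ht1 htK *.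
  have hq : nonneg_prices (qv p S t) by apply: qv_ge0 => //; lra.
  have [sub hv z] := @demand_lemma R n v p S (X' (qv p S t)) t ht hp (hX p hp) (hX' _ hq).
  split => //; split => // i x hx; rewrite /seller_utility.
  have hqi : 0 <= qv p S t i * (i \in X' (qv p S t))%:R by rewrite mulr_ge0.
  case: (boolP (i \in X' (upd (qv p S t) i x))) => hi; last first.
    rewrite mulr0; lra.
  have hd := @dev_lemma R n v X X' p t i x ht ht1 hNash hX hX' hx hi.
  rewrite -/S -/P in hd.
  rewrite /upd eqxx mulr1.
  have tP : 0 <= t * P by rewrite mulr_ge0 //; lra.
  have tpi : t * p i <= t * P by apply: ler_wpM2l; [lra | apply: pi_le].
  rewrite /K in htK.
  case: (boolP (i \in X' (qv p S t))) => hiT.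
    rewrite (subsetP sub i hiT) mulr1 /qv (subsetP sub i hiT) /= !mulr1 mulr0 in hd *.
    lra.
  rewrite mulr0.
  case: (boolP (i \in S)) => hiS.
    rewrite hiS mulr1 (z i hiS hiT) in hd; lra.
  rewrite (negbTE hiS) mulr0 in hd; lra.
move=> d hd; exists d; split => // eps he hlt i.
have [ht ht1 htK] := tfacts eps he.
set t := eps / (K + eps) in ht ht1 htK *.
rewrite /K in htK.
have tP : 0 <= t * P by rewrite mulr_ge0 //; lra.
have tpi : t * p i <= t * P by apply: ler_wpM2l; [lra | apply: pi_le].
have := hp i.
rewrite /qv; case: (i \in S) => /=; rewrite ?mulr1 ?mulr0 => hpi.
  have tn : 0 <= t * n%:R by rewrite mulr_ge0 //; lra.
  have -> : p i - t * p i + 0 - p i = - (t * p i) by ring.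
  rewrite normrN ger0_norm; first lra.
  by rewrite mulr_ge0 //; lra.
have tn : 0 <= t * n%:R by rewrite mulr_ge0 //; lra.
have -> : p i - 0 + t - p i = t by ring.
rewrite ger0_norm; lra.
Qed.
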